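(* Let $E=(A\subset B)\in\mathcal S$ have Klein tableau $\Pi=[\gamma^0,\ldots,\gamma^e;\varphi^2,\ldots,\varphi^e]$ and let $k\le\ell\le e$ be natural numbers. Then the embeddings $E\!\downarrow_{\ell-k}|^k$ and $E|^\ell\!\downarrow_{\ell-k}$ coincide as objects of $\mathcal S$ (both equal $(p^{\ell-k}A/p^\ell A\subset B/p^\ell A)$), and their Klein tableau is $$[\gamma^{\ell-k},\gamma^{\ell-k+1},\ldots,\gamma^\ell;\varphi^{\ell-k+2},\ldots,\varphi^\ell]=\Pi|_k^\ell.$$ In particular, for $k=2$ the Klein tableau is $\Pi|_2^\ell=[\gamma^{\ell-2},\gamma^{\ell-1},\gamma^\ell;\varphi^\ell]$.
   Context: Let $R$ be a commutative principal ideal domain, $p$ a generator of a maximal ideal, $k_0=R/(p)$. A $p$-module is a finite-length $R$-module annihilated by some power of $p$. For a $p$-module $B$, $\mathrm{type}(B)$ is the partition $\beta$ with conjugate $\beta'_i=\dim_{k_0}p^{i-1}B/p^iB$. $\mathcal S$ is the category of embeddings $(A\subset B)$ of submodules in $p$-modules. For $E=(A\subset B)$: $E\!\downarrow_s=(p^sA\subset B)$ and $E|^\ell=(A/p^\ell A\subset B/p^\ell A)$. Partitions are drawn with the $i$-th column of length equal to the $i$-th part, rows numbered from the top. Klein tableau of $E=(A\subset B)$, $e$ the exponent of $A$: $\Pi(E)=[\gamma^0,\ldots,\gamma^e;\varphi^2,\ldots,\varphi^e]$ with $\gamma^i=\mathrm{type}(B/p^iA)$, and $\varphi^\ell$ the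 unique map from the boxes of the skew diagram $\gamma^\ell\setminus\gamma^{\ell-1}$ to positive integers, weakly increasing from left to right in each row, such that for $r\ge1$ the number of boxes in row $m$ with value $r$ equals $(\gamma^{\ell,r})'_m-(\gamma^{\ell,r-1})'_m$, where $\gamma^{\ell,r}=\mathrm{type}\big(B/(p^\ell A+p(p^{\ell-2}A\cap p^rB))\big)$. Restriction: for $u\le\ell\le e$, $\Pi|_u^\ell=[\gamma^{\ell-u},\ldots,\gamma^\ell;\varphi^{\ell-u+2},\ldots,\varphi^\ell]$, regarded as a Klein tableau whose stripe $\gamma^{\ell-u+j}\setminus\gamma^{\ell-u+j-1}$ is labelled $j$, subscripts retained. *)

(* Defs.v *)
From HB Require Import structures.
From mathcomp Require Import all_boot all_order all_algebra.
From Stdlib Require Import ClassicalEpsilon.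
Set Implicit Arguments. Unset Strict Implicit. Unset Printing Implicit Defensive.
Import GRing.Theory.
Local Open Scope ring_scope.

Section RingDefs.
Variable R : idomainType.

Definition dvdr (a x : R) : Prop := exists c, x = c * a.

Definition is_ideal (I : R -> Prop) : Prop :=
  I 0 /\ (forall x y, I x -> I y -> I (x + y)) /\ (forall a x, I x -> I (a * x)).

Definition is_principal (I : R -> Prop) : Prop :=
  exists a, forall x, I x <-> dvdr a x.

Definition is_pid : Prop := forall I, is_ideal I -> is_principal I.

Definition is_maximal_ideal (M : R -> Prop) : Prop :=
  is_ideal M /\ ~ M 1 /\
  forall J, is_ideal J -> (forall x, M x -> J x) -> (forall x, J x -> M x) \/ J 1.
End RingDefs.

Section ModDefs.
Variables (R : idomainType) (V : lmodType R).

Definition sset := V -> Prop.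
Definition szero : sset := fun x => x = 0.
Definition ssub (M N : sset) : Prop := forall x, M x -> N x.
Definition ssum (M N : sset) : sset := fun x => exists y z, M y /\ N z /\ x = y + z.
Definition scap (M N : sset) : sset := fun x => M x /\ N x.
Definition pmul (p : R) (s : nat) (M : sset) : sset :=
  fun x => exists y, M y /\ x = p ^+ s *: y.

Definition submod (M : sset) : Prop :=
  M 0 /\ (forall x y, M x -> M y -> M (x + y)) /\ (forall a x, M x -> M (a *: x)).

Definition finite_length (B : sset) : Prop :=
  exists (n : nat) (Ms : nat -> sset),
    (forall x, Ms 0%N x <-> x = 0) /\ (forall x, Ms n x <-> B x) /\
    (forall i, (i <= n)%N -> submod (Ms i)) /\
    (forall i, (i < n)%N ->
       ssub (Ms i) (Ms i.+1) /\ ~ ssub (Ms i.+1) (Ms i) /\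
       forall M, submod M -> ssub (Ms i) M -> ssub M (Ms i.+1) ->
         ssub M (Ms i) \/ ssub (Ms i.+1) M).

Definition p_module (p : R) (B : sset) : Prop :=
  submod B /\ finite_length B /\ exists n : nat, forall x, B x -> p ^+ n *: x = 0.

(** [kdim_is p P Q n]: the k0 = R/(p)-vector space P/Q (where pP <= Q <= P)
    has dimension n: there are x_1..x_n in P whose residues form a k0-basis. *)
Definition kdim_is (p : R) (P Q : sset) (n : nat) : Prop :=
  exists xs : n.-tuple V,
    (forall i, P (tnth xs i)) /\
    (forall y, P y -> exists c : n.-tuple R,
        Q (y - \sum_(i < n) tnth c i *: tnth xs i)) /\
    (forall c : n.-tuple R, Q (\sum_(i < n) tnth c i *: tnth xs i) ->
        forall i, dvdr p (tnth c i)).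

Definition kdim (p : R) (P Q : sset) : nat :=
  epsilon (inhabits 0%N) (kdim_is p P Q).

(** Conjugate of type(B/N): m |-> dim_k0 p^(m-1)(B/N) / p^m(B/N), for m >= 1
    (N a submodule of B; p^j(B/N) = (p^j B + N)/N). *)
Definition typec (p : R) (B N : sset) (m : nat) : nat :=
  kdim p (ssum (pmul p m.-1 B) N) (ssum (pmul p m B) N).

(** An object of S presented as a subquotient (A/N <= B/N) with N <= A <= B
    submodules of V; a genuine embedding (A <= B) is [embedding A B] (N = 0). *)
Record sq := SQ { sq_N : sset; sq_A : sset; sq_B : sset }.

Definition embedding (A B : sset) : sq := SQ szero A B.

Definition sq_eq (E F : sq) : Prop :=
  (forall x, sq_N E x <-> sq_N F x) /\ (forall x, sq_A E x <-> sq_A F x) /\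
  (forall x, sq_B E x <-> sq_B F x).

Definition sq_down (p : R) (s : nat) (E : sq) : sq :=
  SQ (sq_N E) (ssum (pmul p s (sq_A E)) (sq_N E)) (sq_B E).

Definition sq_restr (p : R) (l : nat) (E : sq) : sq :=
  SQ (ssum (pmul p l (sq_A E)) (sq_N E)) (sq_A E) (sq_B E).

Definition exponent_is (p : R) (E : sq) (e : nat) : Prop :=
  ssub (pmul p e (sq_A E)) (sq_N E) /\
  forall e', (e' < e)%N -> ~ ssub (pmul p e' (sq_A E)) (sq_N E).

(** (gamma^i)'_m = conjugate of type(B / p^i A) *)
Definition kgamma (p : R) (E : sq) (i m : nat) : nat :=
  typec p (sq_B E) (ssum (pmul p i (sq_A E)) (sq_N E)) m.

Definition kgamma_r (p : R) (E : sq) (l r m : nat) : nat :=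
  let A := sq_A E in let B := sq_B E in let N := sq_N E in
  typec p B
    (ssum (ssum (pmul p l A)
                (pmul p 1 (scap (ssum (pmul p (l - 2) A) N) (ssum (pmul p r B) N))))
          N) m.

End ModDefs.

(** A tableau is (e, gamma, phi): gamma i m = (gamma^i)'_m (rows m >= 1),
   phi l m c = value of phi^l on the box in row m, column c of the skew diagram
   gamma^l \ gamma^(l-1) (columns gamma^(l-1)'_m < c <= gamma^l'_m). *)
Record KT := MkKT { kt_e : nat; kt_gamma : nat -> nat -> nat;
                    kt_phi : nat -> nat -> nat -> nat }.

Definition is_klein_tableau (R : idomainType) (V : lmodType R) (p : R)
    (E : sq V) (T : KT) : Prop :=
  let e := kt_e T in let g := kt_gamma T in let phi := kt_phi T in
  exponent_is p E e /\
  (forall i m, (i <= e)%N -> (0 < m)%N -> g i m = kgamma p E i m) /\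
  (forall l, (2 <= l <= e)%N -> forall m, (0 < m)%N ->
     let box c := (g l.-1 m < c <= g l m)%N in
     (forall c, box c -> (1 <= phi l m c)%N) /\
     (forall c1 c2, box c1 -> box c2 -> (c1 <= c2)%N -> (phi l m c1 <= phi l m c2)%N) /\
     (forall r, (1 <= r)%N ->
        ((count (fun c => phi l m c == r) (iota (g l.-1 m).+1 (g l m - g l.-1 m)))%:Z
         = (kgamma_r p E l r m)%:Z - (kgamma_r p E l r.-1 m)%:Z)%R)).

(** restriction Pi|_u^l, stripes relabelled, values (subscripts) retained *)
Definition kt_restrict (T : KT) (u l : nat) : KT :=
  MkKT u (fun j => kt_gamma T (l - u + j)) (fun j => kt_phi T (l - u + j)).

(* Main.v *)
Require Import Defs.
From HB Require Import structures.
From mathcomp Require Import all_boot all_order all_algebra.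
From mathcomp Require Import zify.
From Stdlib Require Import FunctionalExtensionality PropExtensionality.
Local Open Scope ring_scope.
Import GRing.Theory.

Section Aux.
Variables (R : idomainType) (p : R) (V : lmodType R).
Implicit Types (A B M N : sset V).

Lemma seteq M N : (forall x, M x <-> N x) -> M = N.
Proof. move=> H; apply: functional_extensionality => x; apply: propositional_extensionality; exact: H. Qed.

Lemma ssum0 M : ssum M (@szero R V) = M.
Proof.
apply: seteq => x; split.
- by move=> [y [z [Hy [Hz ->]]]]; rewrite Hz addr0.
- move=> Hx; exists x, 0; split=> //; split=> //; by rewrite addr0.
Qed.

Lemma pmul_pmul a b M : pmul p a (pmul p b M) = pmul p (b + a) M.
Proof.
apply: seteq => x; split.
- move=> [y [[z [Hz ->]] ->]]; exists z; split=> //.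
  by rewrite scalerA -exprD addnC.
- move=> [z [Hz ->]]; exists (p ^+ b *: z); split; first by exists z.
  by rewrite scalerA -exprD addnC.
Qed.

Lemma pX_split n m (v : V) : (n <= m)%N -> p ^+ m *: v = p ^+ n *: (p ^+ (m - n) *: v).
Proof. by move=> H; rewrite scalerA -exprD subnKC. Qed.

Lemma submod0 A : submod A -> A 0.
Proof. by case. Qed.
Lemma submodD A x y : submod A -> A x -> A y -> A (x + y).
Proof. by case=> _ [H _]; apply: H. Qed.
Lemma submodZ A a x : submod A -> A x -> A (a *: x).
Proof. by case=> _ [_ H]; apply: H. Qed.
Lemma submodB A x y : submod A -> A x -> A y -> A (x - y).
Proof.
move=> HA Hx Hy; apply: (@submodD A) => //.
by rewrite -scaleN1r; apply: (@submodZ A).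
Qed.

Lemma absorb A a b : submod A -> (a <= b)%N ->
  ssum (pmul p a A) (pmul p b A) = pmul p a A.
Proof.
move=> HA Hab; apply: seteq => x; split.
- move=> [y [z [[y0 [Hy0 ->]] [[z0 [Hz0 ->]] ->]]]].
  exists (y0 + p ^+ (b - a) *: z0); split.
    by apply: (@submodD A) => //; apply: (@submodZ A).
  by rewrite scalerDr -pX_split.
- move=> Hx; exists x, 0; split=> //; split; last by rewrite addr0.
  by exists 0; rewrite scaler0; split=> //; apply: (@submod0 A).
Qed.

Lemma pmul_mono A a b : submod A -> (a <= b)%N -> ssub (pmul p b A) (pmul p a A).
Proof.
move=> HA Hab x [y [Hy ->]]; exists (p ^+ (b - a) *: y); split.
  by apply: (@submodZ A).
by rewrite -pX_split.
Qed.

Lemma chain A m : submod A -> ssub (pmul p m A) (pmul p m.+1 A) ->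
  forall n, ssub (pmul p m A) (pmul p (m + n) A).
Proof.
move=> HA H; elim=> [|n IH]; first by rewrite addn0.
move=> x /IH [y [Hy ->]].
have [z [Hz Ez]] : pmul p m.+1 A (p ^+ m *: y) by apply: H; exists y.
exists z; split=> //.
rewrite addnC exprD -scalerA Ez scalerA -exprD; congr (_ ^+ _ *: _); lia.
Qed.

Lemma expo_contra A m l e : submod A -> (m < l)%N ->
  ssub (pmul p m A) (pmul p l A) -> ssub (pmul p e A) (@szero R V) ->
  ssub (pmul p m A) (@szero R V).
Proof.
move=> HA Hml H He x Hx.
have H1 : ssub (pmul p m A) (pmul p m.+1 A).
  by move=> y /H; apply: pmul_mono.
have [z [Hz ->]] := @chain A m HA H1 e x Hx.
rewrite exprD -scalerA.
have -> : p ^+ e *: z = 0 by apply: He; exists z.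
by rewrite scaler0.
Qed.

Lemma key A B L l r : submod A -> (L <= l)%N -> (2 <= L)%N ->
  ssum (ssum (pmul p L A) (pmul p 1 (scap (pmul p (L - 2) A)
        (ssum (pmul p r B) (pmul p l A))))) (pmul p l A)
  = ssum (pmul p L A) (pmul p 1 (scap (pmul p (L - 2) A) (pmul p r B))).
Proof.
move=> HA HL H2; apply: seteq => x; split.
- move=> [y [a3 [Hy [Ha3 ->]]]].
  case: Hy => [y1 [y2 [Hy1 [Hy2 ->]]]].
  case: Hy1 => [a1 [Ha1 ->]].
  case: Hy2 => [w [[Hw1 Hw2] ->]].
  case: Hw1 => [a0 [Ha0 Ew]].
  case: Hw2 => [b [a2 [Hb [Ha2 Ew2]]]].
  case: Ha2 => [a2' [Ha2' Ea2]]; subst a2.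
  case: Ha3 => [a3' [Ha3' ->]].
  exists (p ^+ L *: (a1 + p ^+ (l - L + 1) *: a2' + p ^+ (l - L) *: a3')).
  exists (p ^+ 1 *: b); split.
    exists (a1 + p ^+ (l - L + 1) *: a2' + p ^+ (l - L) *: a3'); split=> //.
    exact: (submodD _ _ _ HA (submodD _ _ _ HA Ha1 (submodZ _ _ _ HA Ha2')) (submodZ _ _ _ HA Ha3')).
  split.
    exists b; split=> //; split=> //.
    exists (a0 - p ^+ (l - (L - 2)) *: a2'); split.
      by apply: (@submodB A) => //; apply: (@submodZ A).
    have -> : b = w - p ^+ l *: a2' by rewrite Ew2 addrK.
    by rewrite Ew scalerBr -pX_split //; lia.
  rewrite Ew2 !scalerDr !scalerA -!exprD.
  rewrite (_ : (L + (l - L + 1) = 1 + l)%N); last by lia.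
  rewrite (_ : (L + (l - L) = l)%N); last by lia.
  rewrite exprD -scalerA. 
  by rewrite -!addrA; congr (_ + _); rewrite addrC -addrA; congr (_ + _); rewrite addrC.
- move=> [y [z [Hy [[w [[Hw1 Hw2] ->]] ->]]]].
  exists (y + p ^+ 1 *: w), 0; split.
    exists y, (p ^+ 1 *: w); split=> //; split=> //.
    exists w; split=> //; split=> //.
    exists w, 0; split=> //; split; last by rewrite addr0.
    by exists 0; rewrite scaler0; split=> //; apply: (@submod0 A).
  split; last by rewrite addr0.
  by exists 0; rewrite scaler0; split=> //; apply: (@submod0 A).
Qed.

End Aux.

Theorem lemma10 (R : idomainType) (p : R) (V : lmodType R) (A B : sset V)
    (T : KT) (k l : nat) :
  is_pid R -> is_maximal_ideal (dvdr p) ->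
  p_module p B -> submod A -> ssub A B ->
  is_klein_tableau p (embedding A B) T ->
  (k <= l)%N -> (l <= kt_e T)%N ->
  let E := embedding A B in
  let E1 := sq_restr p k (sq_down p (l - k) E) in
  let E2 := sq_down p (l - k) (sq_restr p l E) in
  sq_eq E1 (SQ (pmul p l A) (pmul p (l - k) A) B) /\
  sq_eq E2 (SQ (pmul p l A) (pmul p (l - k) A) B) /\
  is_klein_tableau p E1 (kt_restrict T k l) /\
  is_klein_tableau p E2 (kt_restrict T k l).
Proof.
move=> _ _ _ HA _ HT Hkl Hle E E1 E2.
set F := SQ (pmul p l A) (pmul p (l - k) A) B.
have eqF1 : E1 = F.
  rewrite /E1 /E /F /sq_restr /sq_down /embedding /=.
  by rewrite !ssum0 pmul_pmul subnK.
have eqF2 : E2 = F.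
  rewrite /E2 /E /F /sq_restr /sq_down /embedding /=.
  by rewrite !ssum0 absorb // leq_subr.
rewrite eqF1 eqF2.
have Hsq : sq_eq F F by split; [|split]; move=> x.
suff HK : is_klein_tableau p F (kt_restrict T k l) by [].
case: HT => [[He1 He2] [Hg Hphi]].
split.
  rewrite /= /F /=; split.
    by rewrite pmul_pmul subnK.
  move=> e' He' Hs; rewrite pmul_pmul in Hs.
  have := He2 (l - k + e')%N ltac:(lia).
  apply; exact: (@expo_contra R p V A (l - k + e') l (kt_e T) HA ltac:(lia) Hs He1).
split.
  move=> i m Hi Hm /=.
  simpl in Hi; rewrite (Hg (l - k + i)%N m ltac:(lia) Hm).
  rewrite /kgamma /F /= ssum0 pmul_pmul absorb //; lia.
move=> j Hj m Hm /=; simpl in Hj.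
have Hj' : (2 <= l - k + j <= kt_e T)%N by lia.
have [P1 [P2 P3]] := Hphi _ Hj' m Hm.
have Epred : (l - k + j.-1 = (l - k + j).-1)%N by lia.
rewrite Epred.
have Eg : forall r, kgamma_r p F j r m = kgamma_r p (embedding A B) (l - k + j) r m.
  move=> r; rewrite /kgamma_r /F /embedding /=.
  rewrite !ssum0 !pmul_pmul absorb //; last by lia.
  rewrite (_ : (l - k + (j - 2) = l - k + j - 2)%N); last by lia.
  by rewrite key //; lia.
split=> //; split=> // r Hr; rewrite !Eg; exact: P3.
Qed.
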